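(* For every positive integer $n$, the average value of the Wiener index over $\overline{\mathcal{G}}_n$ is $$W_{avr}(\overline{\mathcal{G}}_n)=\frac{1}{|\overline{\mathcal{G}}_n|}\sum_{G\in\overline{\mathcal{G}}_n}W(G)=18n^3+18n^2-9n.$$
   Context: The Wiener index is $W(G)=\sum_{\{u,v\}\subseteq V(G)}d_G(u,v)$, $d_G$ the shortest-path distance. A polyphenyl hexagonal chain $\overline{G}_n=\overline{H}_0\cdots\overline{H}_{n-1}$ with $n$ hexagons consists of pairwise vertex-disjoint hexagons (6-cycles) $\overline{H}_0,\dots,\overline{H}_{n-1}$ together with cut-edges: $\overline{G}_1=\overline{H}_0$, and for $k\ge1$, $\overline{G}_{k+1}$ is obtained from $\overline{G}_k$ by adding $\overline{H}_k$ and a cut-edge joining a vertex $c_k$ of $\overline{H}_k$ to a vertex $t_k$ of $\overline{H}_{k-1}$, with $t_k\ne c_{k-1}$ for $k\ge2$. For $1\le i\le n-2$ label $\overline{H}_i$ by $O$, $M$ or $P$ according as the distance in $\overline{H}_i$ between $c_i$ and $t_{i+1}$ is $1$, $2$ or $3$; the word $x_1\cdots x_{n-2}$ over $\{O,M,P\}$ is the code of the chain (empty if $n\le2$). The code determines the chain up to isomorphism, and a code and its reverse describe the same chain. $\overline{\mathcal{G}}_n$ denotes the set of all polyphenyl hexagonal chains with $n$ hexagons, i.e. one chain for each class of codes of length $n-2$ under identification of a word with its reverse (so $|\overline{\mathcal{G}}_n|=\frac12(3^{n-2}+3^{\lfloor (n-1)/2\rfloor})$ for $n\ge2$). *)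

(* Defs.v *)
From mathcomp Require Import all_boot all_order all_algebra.
Set Implicit Arguments. Unset Strict Implicit. Unset Printing Implicit Defensive.

(* Graphs are symmetric relations on a finType; distances are shortest-path
   distances, computed as the least m such that v is reachable from u by a walk
   of length m (searched in 0 .. #|T|-1, which suffices for connected graphs). *)
Fixpoint reach (T : finType) (e : rel T) (m : nat) (u v : T) : bool :=
  match m with
  | 0 => u == v
  | m'.+1 => [exists w, e u w && reach e m' w v]
  end.

Definition gdist (T : finType) (e : rel T) (u v : T) : nat :=
  find (fun m => reach e m u v) (iota 0 #|T|).

Definition wiener (T : finType) (e : rel T) : nat :=
  \sum_(u : T) \sum_(v : T | enum_rank u < enum_rank v) gdist e u v.

Definition hexadj : rel 'I_6 :=
  fun a b => (val b == (val a).+1 %% 6) || (val a == (val b).+1 %% 6).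

(* A polyphenyl hexagonal chain with n hexagons H_0,...,H_{n-1} is given by
   vertex choices c k (a vertex of H_k) and t k (a vertex of H_{k-1}) for
   1 <= k <= n-1; the cut-edge joins (k, c k) and (k-1, t k). *)
Record chain := Chain { cv : nat -> 'I_6; tv : nat -> 'I_6 }.

Definition chain_adj (n : nat) (G : chain) : rel ('I_n * 'I_6) :=
  fun x y =>
    ((x.1 == y.1) && hexadj x.2 y.2)
    || [&& (val y.1 == (val x.1).+1), x.2 == tv G y.1 & y.2 == cv G y.1]
    || [&& (val x.1 == (val y.1).+1), y.2 == tv G x.1 & x.2 == cv G x.1].

Arguments chain_adj : clear implicits.

Definition chain_wf (n : nat) (G : chain) : Prop :=
  forall k, 2 <= k < n -> tv G k != cv G k.-1.

Definition chain_W (n : nat) (G : chain) : nat := wiener (chain_adj n G).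

(* Letters O, M, P are encoded as 0, 1, 2 in 'I_3: the letter of H_i is
   (distance in H_i between c_i and t_{i+1}) - 1. *)
Definition chain_code (n : nat) (G : chain) : (n - 2).-tuple 'I_3 :=
  [tuple (inord ((gdist hexadj (cv G i.+1) (tv G i.+2)).-1) : 'I_3) | i < n - 2].

Arguments chain_code : clear implicits.

Definition code_classes (n : nat) : {set {set (n - 2).-tuple 'I_3}} :=
  [set [set s; rev_tuple s] | s : (n - 2).-tuple 'I_3].

(* Main.v *)
Require Import Defs.
From mathcomp Require Import all_boot all_order all_algebra.
From mathcomp Require Import zify lra.
Set Implicit Arguments. Unset Strict Implicit. Unset Printing Implicit Defensive.


Lemma find_iota_eq (p : pred nat) N k : k < N -> p k -> (forall m, m < k -> ~~ p m) ->
  find p (iota 0 N) = k.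
Proof.
move=> kN pk lt.
have -> : N = k + (N - k.+1).+1 by lia.
rewrite iotaD find_cat.
have -> : has p (iota 0 k) = false.
  by apply/hasPn => m; rewrite mem_iota => /andP[_ hm]; apply: lt.
by rewrite size_iota /= add0n pk addn0.
Qed.

Lemma gdist_char (T : finType) (e : rel T) (D : T -> T -> nat) :
 (forall u v, D u v = 0 -> u = v) -> (forall u, D u u = 0) ->
 (forall u w v, e u w -> D u v <= (D w v).+1) ->
 (forall u v m, D u v = m.+1 -> exists w, e u w && (D w v == m)) ->
 (forall u v, D u v < #|T|) ->
 forall u v, gdist e u v = D u v.
Proof.
move=> D0 Dd Dl Dm Db.
have r1 : forall m u v, reach e m u v -> D u v <= m.
  elim=> [|m IH] u v /=; first by move/eqP->; rewrite Dd.
  case/existsP=> w /andP[euw rw].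
  by apply: leq_trans (Dl _ _ _ euw) _; rewrite ltnS; apply: IH.
have r2 : forall m u v, D u v = m -> reach e m u v.
  elim=> [|m IH] u v /=; first by move/D0->.
  case/Dm=> w /andP[euw /eqP dw]; apply/existsP; exists w.
  by rewrite euw IH.
move=> u v; apply: find_iota_eq => //; first exact: r2.
move=> m hm; apply/negP => /r1; lia.
Qed.

Definition hdn (a b : nat) := let d := (a + 6 - b) %% 6 in minn d (6 - d).
Definition hexn (a b : nat) := (b == a.+1 %% 6) || (a == b.+1 %% 6).

Definition hd (a b : 'I_6) := hdn a b.

Lemma all6 (P : nat -> bool) : all P (iota 0 6) -> forall a : 'I_6, P a.
Proof. by move/allP=> H a; apply: H; rewrite mem_iota add0n ltn_ord. Qed.

Lemma s6 (F : nat -> nat) : \sum_(a < 6) F a = F 0 + F 1 + F 2 + F 3 + F 4 + F 5.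
Proof. by rewrite !big_ord_recl big_ord0 /bump /= !addnA addn0. Qed.

Lemma hd_sym a b : hd a b = hd b a.
Proof.
have := @all6 (fun a => all (fun b => hdn a b == hdn b a) (iota 0 6)) erefl a.
by move/all6/(_ b)/eqP.
Qed.

Lemma hd_0 a : hd a a = 0.
Proof. by have /eqP := @all6 (fun a => hdn a a == 0) erefl a. Qed.

Lemma hd_eq0 a b : hd a b = 0 -> a = b.
Proof.
have := @all6 (fun a => all (fun b => (hdn a b == 0) ==> (a == b)) (iota 0 6)) erefl a.
move/all6/(_ b) => /implyP H /eqP /H /eqP ?; exact: val_inj.
Qed.

Lemma hd_le3 a b : hd a b <= 3.
Proof.
have := @all6 (fun a => all (fun b => hdn a b <= 3) (iota 0 6)) erefl a.
by move/all6/(_ b).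
Qed.

Lemma hd_lip a a' b : hexadj a a' -> hd a b <= (hd a' b).+1.
Proof.
have := @all6 (fun a => all (fun a' => all (fun b => hexn a a' ==> (hdn a b <= (hdn a' b).+1)) (iota 0 6)) (iota 0 6)) erefl a.
by move/all6/(_ a')/all6/(_ b)/implyP.
Qed.

Lemma hd_lip2 a a' b : hexadj a a' -> hd b a <= (hd b a').+1.
Proof. by rewrite hd_sym (hd_sym b); apply: hd_lip. Qed.

Lemma hd_desc a b : 0 < hd a b -> exists a', hexadj a a' && (hd a' b == (hd a b).-1).
Proof.
have := @all6 (fun a => all (fun b => (0 < hdn a b) ==> has (fun a' => hexn a a' && (hdn a' b == (hdn a b).-1)) (iota 0 6)) (iota 0 6)) erefl a.
move/all6/(_ b)/implyP => H /H /hasP [a' ]; rewrite mem_iota add0n => /andP[_ a'6] h.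
by exists (Ordinal a'6).
Qed.

Lemma hd_sum t : \sum_(a < 6) hd a t = 9.
Proof.
rewrite (s6 (fun a => hdn a t)).
have := @all6 (fun t => hdn 0 t + hdn 1 t + hdn 2 t + hdn 3 t + hdn 4 t + hdn 5 t == 9) erefl t.
by move/eqP.
Qed.

Lemma hd_sum2 t : \sum_(a < 6) hd t a = 9.
Proof. by rewrite -(hd_sum t); apply: eq_bigr => a _; rewrite hd_sym. Qed.

Lemma hex_gdist a b : gdist hexadj a b = hd a b.
Proof.
apply: gdist_char => //.
- exact: hd_eq0.
- exact: hd_0.
- move=> u w v; exact: hd_lip.
- move=> u v m hm; have [|a' H] := @hd_desc u v; first by rewrite hm.
  by exists a'; rewrite hm in H.
- by move=> u v; rewrite card_ord; apply: leq_ltn_trans (hd_le3 u v) _.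
Qed.

Section Chain.
Variable n : nat.
Variable G : chain.
Local Notation c := (cv G).
Local Notation t := (tv G).

Definition LL m := hd (c m) (t m.+1) + 1.
Definition PP i a j b := hd a (t i.+1) + 1 + \sum_(i.+1 <= m < j) LL m + hd (c j) b.
Definition Dn i a j b := if i == j then hd a b else if i < j then PP i a j b else PP j b i a.

Lemma Dn_sym i a j b : Dn i a j b = Dn j b i a.
Proof.
rewrite /Dn; case: (ltngtP i j) => // _; exact: hd_sym.
Qed.

Lemma cutA i j b : i.+1 <= j -> Dn i (t i.+1) j b = (Dn i.+1 (c i.+1) j b).+1.
Proof.
move=> h; rewrite /Dn (ltn_eqF h) h /PP hd_0.
case: (ltngtP i.+1 j) h => // h _.
- rewrite ?(ltn_eqF h) ?h (big_ltn h) /LL; lia.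
- by rewrite -?h ?eqxx big_geq.
Qed.

Lemma cutB i j b : j <= i -> Dn i.+1 (c i.+1) j b = (Dn i (t i.+1) j b).+1.
Proof.
move=> h; have h1 : (i.+1 == j) = false by apply/negbTE; lia.
have h2 : (i.+1 < j) = false by apply/negbTE; lia.
rewrite /Dn h1 h2 /PP hd_0.
case: (ltngtP j i) h => // h _.
- rewrite ?(gtn_eqF h) ?ltnNge ?(ltnW h) /= big_nat_recr //= /LL; lia.
- by rewrite ?h ?eqxx big_geq // hd_sym; lia.
Qed.

Lemma Dn_hex i a a' j b : hexadj a a' -> Dn i a j b <= (Dn i a' j b).+1.
Proof.
move=> h; rewrite /Dn; case: ifP => _; first exact: hd_lip.
case: ifP => _; rewrite /PP.
- have := hd_lip (t i.+1) h; lia.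
- have := hd_lip2 (c i) h; lia.
Qed.

Definition Dc (x y : 'I_n * 'I_6) := Dn x.1 x.2 y.1 y.2.

Lemma Dc_lip x w y : chain_adj n G x w -> Dc x y <= (Dc w y).+1.
Proof.
case: x w y => [i a] [i' a'] [j b]; rewrite /chain_adj /Dc /=.
case/orP => [/orP [|]|].
- by case/andP=> /eqP -> ; apply: Dn_hex.
- case/and3P=> /eqP hi /eqP -> /eqP ->; rewrite hi.
  case: (leqP i.+1 j) => h.
    by rewrite cutA.
  by rewrite cutB; lia.
- case/and3P=> /eqP hi /eqP -> /eqP ->; rewrite hi.
  case: (leqP i'.+1 j) => h.
    by rewrite cutA; lia.
  by rewrite cutB.
Qed.

Lemma Dc_desc x y m : Dc x y = m.+1 -> exists w, chain_adj n G x w && (Dc w y == m).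
Proof.
case: x y => [i a] [j b]; rewrite /Dc /=.
case: (ltngtP (nat_of_ord i) (nat_of_ord j)) => h.
- have hij : (nat_of_ord i == nat_of_ord j) = false by apply/negbTE; lia.
  rewrite /Dn hij h.
  case: (eqVneq a (t i.+1)) => ha.
  + have hn : i.+1 < n by have := ltn_ord j; lia.
    move=> e; exists (Ordinal hn, c i.+1); apply/andP; split.
      by rewrite /chain_adj /= ha !eqxx /= orbT.
    apply/eqP; rewrite /=.
    have := cutA b h; rewrite /Dn hij h -ha e.
    by case=> ->.
  + have hp : 0 < hd a (t i.+1).
      by rewrite lt0n; apply/eqP => /hd_eq0; apply/eqP.
    have [a' /andP [ha' /eqP e']] := hd_desc hp.
    move=> e; exists (i, a'); apply/andP; split.
      by rewrite /chain_adj /= eqxx ha'.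
    rewrite /= hij h /PP; apply/eqP.
    move: e; rewrite /PP; lia.
- have hij : (nat_of_ord i == nat_of_ord j) = false by apply/negbTE; lia.
  rewrite /Dn hij (ltnNge i j) (ltnW h) /=.
  case: (eqVneq a (c i)) => ha.
  + have i0 : 0 < nat_of_ord i by lia.
    have hn : (nat_of_ord i).-1 < n by apply: leq_ltn_trans (leq_pred _) (ltn_ord i).
    move=> e; exists (Ordinal hn, t i); apply/andP; split.
      by rewrite /chain_adj /= (prednK i0) ha !eqxx /= !orbT.
    apply/eqP; change (Dn (nat_of_ord i).-1 (t i) j b = m).
    have hj : nat_of_ord j <= (nat_of_ord i).-1 by lia.
    have := cutB b hj; rewrite (prednK i0) {1}/Dn hij (ltnNge i j) (ltnW h) /= -ha e.
    by case=> ->.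
  + have hp : 0 < hd (c i) a.
      by rewrite lt0n; apply/eqP => /hd_eq0 /esym; apply/eqP.
    rewrite hd_sym in hp.
    have [a' /andP [ha' /eqP e']] := hd_desc hp.
    move=> e; exists (i, a'); apply/andP; split.
      by rewrite /chain_adj /= eqxx ha'.
    rewrite /= hij (ltnNge i j) (ltnW h) /PP; apply/eqP.
    move: e; rewrite /PP (hd_sym (c i) a) (hd_sym (c i) a'); lia.
- have hij : i = j by apply: val_inj.
  subst j; rewrite /Dn eqxx => e.
  have hp : 0 < hd a b by rewrite e.
  have [a' /andP [ha' /eqP e']] := hd_desc hp.
  exists (i, a'); apply/andP; split.
    by rewrite /chain_adj /= eqxx ha'.
  by rewrite /= eqxx e' e.
Qed.

Lemma Dc_eq0 x y : Dc x y = 0 -> x = y.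
Proof.
case: x y => [i a] [j b]; rewrite /Dc /Dn /=.
case: eqP => [/val_inj -> /hd_eq0 -> //|_].
by case: ifP; rewrite /PP; lia.
Qed.

Lemma Dc_0 x : Dc x x = 0.
Proof. by rewrite /Dc /Dn eqxx hd_0. Qed.

Lemma PP_bound i a j b : PP i a j b <= 7 + 4 * (j - i.+1).
Proof.
rewrite /PP.
have : \sum_(i.+1 <= m < j) LL m <= \sum_(i.+1 <= m < j) 4.
  by apply: leq_sum => m _; rewrite /LL; have := hd_le3 (c m) (t m.+1); lia.
rewrite sum_nat_const_nat.
have := hd_le3 a (t i.+1); have := hd_le3 (c j) b; lia.
Qed.

Lemma Dc_bound x y : Dc x y < #|{: 'I_n * 'I_6}|.
Proof.
rewrite card_prod !card_ord.
case: x y => [i a] [j b]; rewrite /Dc /Dn /=.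
have := ltn_ord i; have := ltn_ord j.
case: eqP => hne.
  by have := hd_le3 a b; lia.
case: ifP => hlt.
  by have := PP_bound i a j b; lia.
move/negbT: hlt; rewrite -leqNgt => hlt.
by have := PP_bound j b i a; lia.
Qed.

Lemma chain_gdist x y : gdist (chain_adj n G) x y = Dc x y.
Proof.
apply: gdist_char.
- exact: Dc_eq0.
- exact: Dc_0.
- exact: Dc_lip.
- exact: Dc_desc.
- exact: Dc_bound.
Qed.

End Chain.

Lemma wiener_half (T : finType) (D : T -> T -> nat) :
  (forall u v, D u v = D v u) -> (forall u, D u u = 0) ->
  2 * \sum_u \sum_(v | enum_rank u < enum_rank v) D u v = \sum_u \sum_v D u v.
Proof.
move=> Ds Dd.
have sp : forall u, \sum_v D u v =
   \sum_(v | enum_rank u < enum_rank v) D u v + \sum_(v | enum_rank v < enum_rank u) D u v.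
  move=> u; rewrite (bigID (fun v => enum_rank u < enum_rank v)) /=; congr (_ + _).
  rewrite (bigD1 u) /=; last by rewrite ltnn.
  rewrite Dd add0n; apply: eq_bigl => v.
  have -> : (v != u) = (nat_of_ord (enum_rank v) != enum_rank u).
    by rewrite (inj_eq val_inj) (inj_eq (@enum_rank_inj _)).
  by rewrite -leqNgt ltn_neqAle andbC.
rewrite (eq_bigr _ (fun u _ => sp u)) big_split /=.
suff -> : \sum_u \sum_(v | enum_rank v < enum_rank u) D u v =
          \sum_u \sum_(v | enum_rank u < enum_rank v) D u v by rewrite mul2n -addnn.
rewrite (eq_bigr (fun u => \sum_v (if enum_rank v < enum_rank u then D u v else 0)));
  last by move=> u _; rewrite big_mkcond.
rewrite exchange_big /=; apply: eq_bigr => u _.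
by rewrite [RHS]big_mkcond; apply: eq_bigr => v _; rewrite Ds.
Qed.

Lemma sum_pair (I J : finType) (F : I * J -> nat) : \sum_x F x = \sum_i \sum_j F (i, j).
Proof. by rewrite pair_big; apply: eq_bigr => -[i j]. Qed.

Lemma sym_split (F : nat -> nat -> nat) n : (forall i j, F i j = F j i) ->
  \sum_(0 <= i < n) \sum_(0 <= j < n) F i j =
  \sum_(0 <= i < n) F i i + 2 * \sum_(0 <= i < n) \sum_(i.+1 <= j < n) F i j.
Proof.
move=> Fs; elim: n => [|n IH]; first by rewrite !big_geq.
have e1 : \sum_(0 <= i < n.+1) \sum_(0 <= j < n.+1) F i j =
   \sum_(0 <= i < n) \sum_(0 <= j < n) F i j + \sum_(0 <= i < n) F i n
   + (\sum_(0 <= j < n) F n j + F n n).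
  rewrite big_nat_recr //= big_nat_recr //=; congr (_ + _).
  by rewrite -big_split /=; apply: eq_bigr => i _; rewrite big_nat_recr.
have e2 : \sum_(0 <= i < n.+1) \sum_(i.+1 <= j < n.+1) F i j =
   \sum_(0 <= i < n) \sum_(i.+1 <= j < n) F i j + \sum_(0 <= i < n) F i n.
  rewrite big_nat_recr //= [X in _ + X]big_geq // addn0.
  rewrite -big_split /=; apply: eq_big_nat => i /andP[_ hi]; rewrite big_nat_recr //.
have e3 : \sum_(0 <= i < n.+1) F i i = \sum_(0 <= i < n) F i i + F n n by rewrite big_nat_recr.
have e4 : \sum_(0 <= j < n) F n j = \sum_(0 <= i < n) F i n by apply: eq_bigr => j _; rewrite Fs.
rewrite e1 e2 e3 e4 IH; lia.
Qed.

Section Chain2.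
Variable n : nat.
Variable G : chain.
Local Notation c := (cv G).
Local Notation t := (tv G).

Definition SS i j := \sum_(i.+1 <= m < j) LL G m.
Definition QQ i j := \sum_(a < 6) \sum_(b < 6) Dn G i a j b.

Lemma QQ_sym i j : QQ i j = QQ j i.
Proof.
rewrite /QQ exchange_big; apply: eq_bigr => a _; apply: eq_bigr => b _; exact: Dn_sym.
Qed.

Lemma QQ_diag i : QQ i i = 54.
Proof.
rewrite /QQ /Dn eqxx (eq_bigr (fun _ => 9)); first by rewrite big_const_ord.
by move=> a _; rewrite hd_sum2.
Qed.

Lemma QQ_lt i j : i < j -> QQ i j = 144 + 36 * SS i j.
Proof.
move=> h; rewrite /QQ /Dn (ltn_eqF h) h /PP.
rewrite (eq_bigr (fun a => 6 * hd a (t i.+1) + (6 + 6 * SS i j + 9))).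
  by rewrite big_split /= -big_distrr /= hd_sum big_const_ord /=; lia.
move=> a _; rewrite big_split /= hd_sum2 big_const_ord /= /SS; lia.
Qed.

Lemma chain_total :
  \sum_(x : 'I_n * 'I_6) \sum_y Dc G x y =
  54 * n + 2 * \sum_(0 <= i < n) \sum_(i.+1 <= j < n) (144 + 36 * SS i j).
Proof.
have E : \sum_(x : 'I_n * 'I_6) \sum_y Dc G x y = \sum_(i < n) \sum_(j < n) QQ i j.
  rewrite sum_pair; apply: eq_bigr => i _.
  rewrite (eq_bigr (fun a => \sum_(j < n) \sum_(b < 6) Dn G i a j b)); last first.
    by move=> a _; rewrite sum_pair.
  by rewrite exchange_big.
rewrite E -(big_mkord xpredT (fun i => \sum_(j < n) QQ i j)).
rewrite (eq_bigr (fun i => \sum_(0 <= j < n) QQ i j)); last first.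
  by move=> i _; rewrite -(big_mkord xpredT (QQ i)).
rewrite sym_split; last exact: QQ_sym.
rewrite (eq_bigr (fun _ => 54)); last by move=> i _; rewrite QQ_diag.
rewrite sum_nat_const_nat subn0; congr (_ + 2 * _); first by rewrite mulnC.
apply: eq_bigr => i _; apply: eq_big_nat => j /andP[hj _]; exact: QQ_lt.
Qed.

Lemma chain_W_eq :
  chain_W n G = 27 * n + \sum_(0 <= i < n) \sum_(i.+1 <= j < n) (144 + 36 * SS i j).
Proof.
have H := chain_total.
have E : chain_W n G = \sum_(u : 'I_n * 'I_6) \sum_(v | enum_rank u < enum_rank v) Dc G u v.
  rewrite /chain_W /wiener; apply: eq_bigr => u _; apply: eq_bigr => v _.
  exact: chain_gdist.
rewrite -(wiener_half (D := Dc G)) in H.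
- rewrite E; apply/eqP; rewrite -(eqn_pmul2l (_ : 0 < 2)) // H mulnDr mulnA (_ : 2 * 27 = 54) //.
- by move=> u v; rewrite /Dc Dn_sym.
- exact: Dc_0.
Qed.

End Chain2.

Lemma U_sum (g : nat -> nat) n :
  \sum_(0 <= i < n) \sum_(i.+1 <= m < n) g m = \sum_(0 <= m < n) g m * m.
Proof.
elim: n => [|n IH]; first by rewrite !big_geq.
rewrite big_nat_recr //= [X in _ + X]big_geq // addn0.
rewrite (eq_big_nat _ _ (F2 := fun i => \sum_(i.+1 <= m < n) g m + g n)); last first.
  by move=> i /andP[_ hi]; rewrite big_nat_recr.
rewrite big_split /= IH sum_nat_const_nat subn0 big_nat_recr //=; lia.
Qed.

Lemma T_sum (g : nat -> nat) n :
  \sum_(0 <= i < n) \sum_(i.+1 <= j < n) \sum_(i.+1 <= m < j) g m =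
  \sum_(0 <= m < n) g m * (m * (n.-1 - m)).
Proof.
elim: n => [|n IH]; first by rewrite !big_geq.
rewrite big_nat_recr //= [X in _ + X]big_geq // addn0.
rewrite (eq_big_nat _ _ (F2 := fun i => \sum_(i.+1 <= j < n) \sum_(i.+1 <= m < j) g m
                                       + \sum_(i.+1 <= m < n) g m)); last first.
  by move=> i /andP[_ hi]; rewrite big_nat_recr.
rewrite big_split /= IH U_sum big_nat_recr //= subnn !muln0 addn0.
rewrite -big_split /=; apply: eq_big_nat => m /andP[_ hm].
have -> : m * (n - m) = m * (n.-1 - m) + m.
  case: n hm {IH} => // n hm; rewrite /= -mulnSr; congr (_ * _); lia.
by rewrite mulnDr.
Qed.

Lemma shift_sum (g : nat -> nat) n :
  \sum_(0 <= m < n) g m * (m * (n.-1 - m)) = \sum_(i < n - 2) g i.+1 * (i.+1 * (n - 2 - i)).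
Proof.
case: n => [|[|k]]; first by rewrite big_geq // big_ord0.
  by rewrite big_nat1 big_ord0 !muln0.
rewrite big_nat_recl // mul0n muln0 add0n big_nat_recr //= subnn !muln0 addn0.
have -> : k.+2 - 2 = k by lia.
rewrite -(big_mkord xpredT (fun i => g i.+1 * (i.+1 * (k - i)))).
by apply: eq_big_nat => i /andP[_ hi]; rewrite subSS.
Qed.

Definition Kn n := 27 * n + \sum_(0 <= i < n) \sum_(i.+1 <= j < n) 144.
Definition ww n i := i.+1 * (n - 2 - i).
Definition Sc n (s : (n - 2).-tuple 'I_3) := \sum_(i < n - 2) (val (tnth s i) + 2) * ww n i.

Lemma W_code n G : chain_wf n G -> chain_W n G = Kn n + 36 * Sc (chain_code n G).
Proof.
move=> wf; rewrite chain_W_eq /Kn -addnA; congr (_ + _).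
rewrite (eq_bigr (fun i => \sum_(i.+1 <= j < n) 144 + 36 * \sum_(i.+1 <= j < n) SS G i j));
  last by move=> i _; rewrite big_split /= -big_distrr.
rewrite big_split /= -big_distrr /=; congr (_ + 36 * _).
rewrite /SS T_sum shift_sum /Sc; apply: eq_bigr => i _.
rewrite /ww; congr (_ * _).
rewrite tnth_mktuple hex_gdist.
have hi := ltn_ord i.
have hne : tv G i.+2 != cv G i.+1 by apply: wf; lia.
have h0 : 0 < hd (cv G i.+1) (tv G i.+2).
  by rewrite lt0n; apply/eqP => /hd_eq0 e; move: hne; rewrite e eqxx.
have h3 := hd_le3 (cv G i.+1) (tv G i.+2).
rewrite -[\val _]/(nat_of_ord _) inordK /LL; lia.
Qed.

Definition Mid n := \sum_(i < n - 2) 3 * ww n i.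

Definition sig n (s : (n - 2).-tuple 'I_3) : (n - 2).-tuple 'I_3 := [tuple of map (@rev_ord 3) s].

Lemma sigK n : cancel (@sig n) (@sig n).
Proof.
move=> s; apply: val_inj => /=; rewrite -map_comp.
by rewrite (eq_map (g := id)) ?map_id // => x /=; rewrite rev_ordK.
Qed.

Lemma sig_rev n (s : (n - 2).-tuple 'I_3) : sig (rev_tuple s) = rev_tuple (sig s).
Proof. by apply: val_inj; rewrite /= map_rev. Qed.

Lemma Sc_rev n (s : (n - 2).-tuple 'I_3) : Sc (rev_tuple s) = Sc s.
Proof.
rewrite /Sc [LHS](reindex_inj rev_ord_inj) /=; apply: eq_bigr => i _.
have hi := ltn_ord i.
have -> : tnth (rev_tuple s) (rev_ord i) = tnth s i.
  rewrite (tnth_nth ord0) (tnth_nth ord0) /= nth_rev ?size_tuple; last by lia.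
  congr nth; lia.
congr (_ * _); rewrite /ww /=.
have -> : (n - 2 - i.+1).+1 = n - 2 - i by lia.
have -> : n - 2 - (n - 2 - i.+1) = i.+1 by lia.
by rewrite mulnC.
Qed.

Lemma Sc_sig n (s : (n - 2).-tuple 'I_3) : Sc (sig s) + Sc s = 2 * Mid n.
Proof.
rewrite /Sc /Mid -big_split big_distrr /=; apply: eq_bigr => i _.
rewrite tnth_map /= -mulnDl mulnA.
have h := ltn_ord (tnth s i); congr (_ * _); lia.
Qed.

Lemma tri k : 2 * \sum_(0 <= i < k) i.+1 = k * k.+1.
Proof. elim: k => [|k IH]; first by rewrite big_geq. rewrite big_nat_recr //= mulnDr IH; lia. Qed.

Lemma tet k : 6 * \sum_(i < k) i.+1 * (k - i) = k * k.+1 * k.+2.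
Proof.
rewrite -(big_mkord xpredT (fun i => i.+1 * (k - i))).
elim: k => [|k IH]; first by rewrite big_geq.
rewrite big_nat_recr //= subSnn muln1.
rewrite (eq_big_nat _ _ (F2 := fun i => i.+1 * (k - i) + i.+1)); last first.
  move=> i /andP[_ hi]; have -> : k.+1 - i = (k - i).+1 by lia.
  by rewrite mulnS addnC.
rewrite big_split /= mulnDr mulnDr IH.
have hB := tri k.
have -> : 6 * \sum_(0 <= i < k) i.+1 = 3 * (k * k.+1) by rewrite -hB mulnA.
lia.
Qed.

Lemma closed_form n : 1 <= n -> Kn n + 36 * Mid n + 9 * n = 18 * n ^ 3 + 18 * n ^ 2.
Proof.
move=> hn.
have P2 : n * n = n + 2 * \sum_(0 <= i < n) \sum_(i.+1 <= j < n) 1.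
  have := @sym_split (fun _ _ => 1) n (fun _ _ => erefl).
  set P := (X in _ = _ + 2 * X).
  rewrite (eq_bigr (fun _ => n)); last by move=> i _; rewrite sum_nat_const_nat; lia.
  rewrite !sum_nat_const_nat; lia.
have K : \sum_(0 <= i < n) \sum_(i.+1 <= j < n) 144 = 144 * \sum_(0 <= i < n) \sum_(i.+1 <= j < n) 1.
  rewrite big_distrr; apply: eq_bigr => i _; rewrite big_distrr; apply: eq_bigr => j _; by [].
have M : Mid n = 3 * \sum_(i < n - 2) i.+1 * (n - 2 - i).
  by rewrite /Mid big_distrr.
have T := tet (n - 2).
rewrite /Kn K M.
case: n hn P2 T K M => // [[|k]] _ P2 T _ _.
  by rewrite big_ord0 in T *; lia.
have e : k.+2 - 2 = k by lia.
rewrite e in T *.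
rewrite !expnS expn0 !muln1. lia.
Qed.
Import GRing.Theory Num.Theory.

Theorem theorem5p3 (n : nat) (hn : 1 <= n)
    (rep : {set (n - 2).-tuple 'I_3} -> chain)
    (hwf : forall C, C \in code_classes n -> chain_wf n (rep C))
    (hcode : forall C, C \in code_classes n -> chain_code n (rep C) \in C) :
  ((\sum_(C in code_classes n) chain_W n (rep C))%:R / (#|code_classes n|)%:R
     : rat)%R
  = (18 * (n ^ 3)%:R + 18 * (n ^ 2)%:R - 9 * n%:R)%R.
Proof.
have inX : forall C, C \in code_classes n -> exists s, C = [set s; rev_tuple s].
  by move=> C /imsetP [s _ ->]; exists s.
have Xin : forall s, [set s; rev_tuple s] \in code_classes n.
  by move=> s; apply/imsetP; exists s.
have hW : forall C s, C \in code_classes n -> C = [set s; rev_tuple s] ->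
    chain_W n (rep C) = Kn n + 36 * Sc s.
  move=> C s CX eC; rewrite W_code; last exact: hwf.
  by have := hcode C CX; rewrite eC => /set2P [-> | ->] //; rewrite Sc_rev.
pose sigC (C : {set (n - 2).-tuple 'I_3}) := [set @sig n x | x in C].
have sigCK : cancel sigC sigC.
  move=> C; rewrite /sigC -imset_comp (eq_imset _ (@sigK n)); exact: imset_id.
have sigE : forall s, sigC [set s; rev_tuple s] = [set sig s; rev_tuple (sig s)].
  by move=> s; rewrite /sigC imsetU1 imset_set1 sig_rev.
have sigX : forall C, C \in code_classes n -> sigC C \in code_classes n.
  by move=> C /inX [s ->]; rewrite sigE; exact: Xin.
have key : forall C, C \in code_classes n ->
    chain_W n (rep C) + chain_W n (rep (sigC C)) = 2 * (Kn n + 36 * Mid n).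
  move=> C CX; have [s eC] := inX C CX.
  rewrite (hW C s CX eC) (hW (sigC C) (sig s) (sigX C CX)); last by rewrite eC sigE.
  have := Sc_sig s; lia.
have S2 : \sum_(C in code_classes n) chain_W n (rep C) = #|code_classes n| * (Kn n + 36 * Mid n).
  have E : \sum_(C in code_classes n) chain_W n (rep C) =
           \sum_(C in code_classes n) chain_W n (rep (sigC C)).
    rewrite [LHS](reindex_inj (can_inj sigCK)); apply: eq_bigl => C.
    by apply/idP/idP => [/sigX|]; [rewrite sigCK | exact: sigX].
  have E2 : \sum_(C in code_classes n) chain_W n (rep C) + \sum_(C in code_classes n) chain_W n (rep C)
     = \sum_(C in code_classes n) (2 * (Kn n + 36 * Mid n)).
    rewrite {2}E -big_split; apply: eq_bigr => C CX; exact: key.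
  move: E2; rewrite sum_nat_const addnn -mul2n mulnCA => /eqP; rewrite eqn_pmul2l // => /eqP.
  done.
have cpos : (#|code_classes n|%:R != 0 :> rat)%R.
  rewrite pnatr_eq0 -lt0n; apply/card_gt0P.
  by exists [set [tuple of nseq (n - 2) (ord0 : 'I_3)]; rev_tuple [tuple of nseq (n - 2) (ord0 : 'I_3)]].
rewrite S2 natrM [X in (X / _)%R]mulrC mulfK //.
have := congr1 (fun m => m%:R : rat) (closed_form hn).
rewrite /= !natrD !natrM => H.
lra.
Qed.
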